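(* Let $z\in\mathbb{R}^n$, $\lambda_1,\lambda_2>0$, $l\le 0\le u$ in $\mathbb{R}^n$, and for $i\in[n]$ let $\omega_i(\alpha)=\lambda_2|\alpha|_0+\delta_{[l_i,u_i]}(\alpha)$ for $\alpha\in\mathbb{R}$. Set $H(0)=-\lambda_1$ and, for $s\in[n]$, $$h_s(y;z_{1:s})=\tfrac12\|y-z_{1:s}\|^2+\lambda_1\sum_{j=1}^{s-1}|y_j-y_{j+1}|_0+\sum_{j=1}^s\omega_j(y_j)\ (y\in\mathbb{R}^s),\qquad H(s)=\min_{y\in\mathbb{R}^s}h_s(y;z_{1:s}),$$ and define $P_s:[0\!:\!s-1]\times\mathbb{R}\to(-\infty,+\infty]$ by $$P_s(i,\alpha)=H(i)+\tfrac12\|\alpha\mathbf{1}-z_{i+1:s}\|^2+\sum_{j=i+1}^s\omega_j(\alpha)+\lambda_1.$$ Fix any $s\in[n]$. Then: (i) $H(s)=\min_{i\in[0:s-1],\ \alpha\in\mathbb{R}}P_s(i,\alpha)$; (ii) if $(i_s^*,\alpha_s^* )\in\arg\min_{i\in[0:s-1],\alpha\in\mathbb{R}}P_s(i,\alpha)$, then $y^*=(y^*_{1:i_s^*};\alpha_s^*\mathbf{1})$ is a global minimizer of $\min_{y\in\mathbb{R}^s}h_s(y;z_{1:s})$, where $y^*_{1:i_s^*}\in\arg\min_{v\in\mathbb{R}^{i_s^*}}h_{i_s^*}(v;z_{1:i_s^*})$ (when $i_s^*=0$, $y^*=\alpha_s^*\mathbf{1}$).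
   Context: $|t|_0=0$ if $t=0$ and $1$ otherwise; $\delta_{[a,b]}$ is the indicator of the interval $[a,b]$. $[n]=\{1,\dots,n\}$, $[j\!:\!k]=\{j,\dots,k\}$, $z_{j:k}=(z_j,\dots,z_k)$, and $\mathbf{1}$ is the all-ones vector of the appropriate dimension. In this context $\sum_{j=1}^{s-1}|y_j-y_{j+1}|_0$ is $\|\widehat{B}y\|_0$ for the fused difference operator $\widehat B y=(y_1-y_2,\dots,y_{s-1}-y_s)$, so $H(n)$ is the optimal value of $\min_x \frac12\|x-z\|^2+\lambda_1\|\widehat Bx\|_0+\lambda_2\|x\|_0+\delta_{\{l\le x\le u\}}(x)$. *)

(* Defs.v *)
From HB Require Import structures.
From mathcomp Require Import all_boot all_order all_algebra.
From mathcomp Require Import all_classical all_reals.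
From mathcomp Require Import ereal.

Set Implicit Arguments. Unset Strict Implicit. Unset Printing Implicit Defensive.
Import Order.TTheory GRing.Theory Num.Theory.
Local Open Scope ring_scope.
Local Open Scope ereal_scope.

Section Defs.
Variable R : realType.

(* 1-based entry j (1 <= j <= s) of a vector y in R^s = 'rV[R]_s. *)
Definition ent (s : nat) (y : 'rV[R]_s) (j : nat) : R :=
  oapp (fun k : 'I_s => y ord0 k) 0%R (insub j.-1).

Definition l0 (t : R) : R := if t == 0%R then 0%R else 1%R.

Definition delta_int (a b x : R) : \bar R := if (a <= x <= b)%R then 0 else +oo.

(* omega_j(alpha) = lambda2 |alpha|_0 + delta_[l_j,u_j](alpha); vectors z l u are
   given 1-based as functions nat -> R (only indices 1..n are meaningful). *)
Definition omega (l u : nat -> R) (lam2 : R) (j : nat) (a : R) : \bar R :=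
  (lam2 * l0 a)%:E + delta_int (l j) (u j) a.

Definition hs (z l u : nat -> R) (lam1 lam2 : R) (s : nat) (y : 'rV[R]_s) : \bar R :=
  ((2%:R^-1 * \sum_(1 <= j < s.+1) (ent y j - z j) ^+ 2)
   + lam1 * \sum_(1 <= j < s) l0 (ent y j - ent y j.+1))%:E
  + \sum_(1 <= j < s.+1) omega l u lam2 j (ent y j).

(* H(0) = -lambda1 ; H(s) = min_y h_s(y) (taken as the infimum, s >= 1). *)
Definition Hs (z l u : nat -> R) (lam1 lam2 : R) (s : nat) : \bar R :=
  if s is 0 then (- lam1)%:E
  else ereal_inf (range (hs z l u lam1 lam2 (s := s))).

Definition Ps (z l u : nat -> R) (lam1 lam2 : R) (s i : nat) (a : R) : \bar R :=
  Hs z l u lam1 lam2 i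
  + (2%:R^-1 * \sum_(i.+1 <= j < s.+1) (a - z j) ^+ 2)%:E
  + \sum_(i.+1 <= j < s.+1) omega l u lam2 j a
  + lam1%:E.

Definition concat_const (i s : nat) (v : 'rV[R]_i) (a : R) : 'rV[R]_s :=
  \row_(k < s) (if (k < i)%N then ent v k.+1 else a).

End Defs.

(* Main.v *)
Require Import Defs.
From HB Require Import structures.
From mathcomp Require Import all_boot all_order all_algebra.
From mathcomp Require Import all_classical all_reals.
From mathcomp Require Import ereal.
From mathcomp Require Import zify ring lra.
Import Order.TTheory GRing.Theory Num.Theory.
Local Open Scope ring_scope.
Local Open Scope ereal_scope.

Section Aux.
Variables (R : realType) (z l u : nat -> R) (lam1 lam2 : R).

Definition fmax (d : R) (r : seq nat) := foldr (fun j acc => Num.max (l j) acc) d r.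
Definition fmin (d : R) (r : seq nat) := foldr (fun j acc => Num.min (u j) acc) d r.

Lemma fmax_ge d r : (d <= fmax d r)%R /\ forall j, j \in r -> (l j <= fmax d r)%R.
Proof.
elim: r => [|k r [IH1 IH2]] /=; first by split.
split; first by rewrite le_max IH1 orbT.
by move=> j; rewrite inE => /orP[/eqP->|/IH2 h]; rewrite le_max ?lexx ?h ?orbT.
Qed.

Lemma fmax_le d r x : (d <= x)%R -> (forall j, j \in r -> (l j <= x)%R) -> (fmax d r <= x)%R.
Proof.
move=> hd; elim: r => [|k r IH] //= h.
rewrite ge_max (h k) ?inE ?eqxx //= IH // => j hj; by apply: h; rewrite inE hj orbT.
Qed.

Lemma fmin_le d r : (fmin d r <= d)%R /\ forall j, j \in r -> (fmin d r <= u j)%R.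
Proof.
elim: r => [|k r [IH1 IH2]] /=; first by split.
split; first by rewrite ge_min IH1 orbT.
by move=> j; rewrite inE => /orP[/eqP->|/IH2 h]; rewrite ge_min ?lexx ?h ?orbT.
Qed.

Lemma fmin_ge d r x : (x <= d)%R -> (forall j, j \in r -> (x <= u j)%R) -> (x <= fmin d r)%R.
Proof.
move=> hd; elim: r => [|k r IH] //= h.
rewrite le_min (h k) ?inE ?eqxx //= IH // => j hj; by apply: h; rewrite inE hj orbT.
Qed.

Lemma quad (k S L U a : R) : (0 < k)%R -> (L <= a <= U)%R -> (L <= U)%R ->
  (k * (if (S / k < L)%R then L else if (U < S / k)%R then U else S / k) ^+ 2
   - 2 * (if (S / k < L)%R then L else if (U < S / k)%R then U else S / k) * S
   <= k * a ^+ 2 - 2 * a * S)%R.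
Proof.
move=> k0 /andP[La aU] LU.
have hS : (S = (S / k) * k)%R by rewrite divfK // gt_eqF.
move: (S / k)%R hS => m hS; rewrite hS.
have key : forall c, (0 <= k * (a - c) * (a + c - 2 * m))%R ->
    (k * c ^+ 2 - 2 * c * (m * k) <= k * a ^+ 2 - 2 * a * (m * k))%R.
  move=> c h; rewrite -subr_ge0.
  have -> : (k * a ^+ 2 - 2 * a * (m * k) - (k * c ^+ 2 - 2 * c * (m * k))
     = k * (a - c) * (a + c - 2 * m))%R by ring.
  exact: h.
case: ifPn => [mL|].
  apply: key; apply: mulr_ge0; [apply: mulr_ge0; lra|lra].
rewrite -leNgt => Lm; case: ifPn => [Um|].
  apply: key; rewrite -mulrA; apply: mulr_ge0; first lra.
  rewrite -mulrNN; apply: mulr_ge0; lra.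
rewrite -leNgt => mU; apply: key.
have -> : (k * (a - m) * (a + m - 2 * m) = k * ((a - m) * (a - m)))%R by ring.
by apply: mulr_ge0; [lra| rewrite -expr2 sqr_ge0].
Qed.


Lemma l00 : l0 (0:R) = 0%R. Proof. by rewrite /l0 eqxx. Qed.
Lemma l0N (a : R) : a != 0%R -> l0 a = 1%R. Proof. by rewrite /l0 => /negPf ->. Qed.
Lemma l0_ge0 (a : R) : (0 <= l0 a)%R. Proof. by rewrite /l0; case: ifP. Qed.
Lemma l0_le1 (a : R) : (l0 a <= 1)%R. Proof. by rewrite /l0; case: ifP. Qed.

Lemma sum_omega (r : seq nat) (a : R) :
  \sum_(j <- r) omega l u lam2 j a =
  if all (fun j => (l j <= a <= u j)%R) r then ((size r)%:R * (lam2 * l0 a))%:E else +oo.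
Proof.
elim: r => [|j r IH]; first by rewrite big_nil /= mul0r.
rewrite big_cons IH /= /omega /delta_int.
case: (l j <= a <= u j)%R; case: (all _ r) => /=.
- by rewrite adde0 -EFinD -[(size r).+1]addn1 natrD; congr (_%:E); ring.
- by rewrite adde0 addey.
- by rewrite addey // addye.
- by rewrite addey // addye.
Qed.

Lemma qsumE (r : seq nat) (a : R) :
  (\sum_(j <- r) (a - z j) ^+ 2 = (size r)%:R * a ^+ 2 - 2 * a * \sum_(j <- r) z j
     + \sum_(j <- r) z j ^+ 2)%R.
Proof.
elim: r => [|j r IH]; first by rewrite !big_nil /= mul0r; ring.
rewrite !big_cons IH /= -[(size r).+1]addn1 natrD; ring.
Qed.

Definition qs (r : seq nat) (a : R) := (\sum_(j <- r) (a - z j) ^+ 2)%R.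
Definition gq (r : seq nat) (a : R) : \bar R :=
  (2%:R^-1 * qs r a)%:E + \sum_(j <- r) omega l u lam2 j a.
Definition Lr r := fmax (l (head 0%N r)) r.
Definition Ur r := fmin (u (head 0%N r)) r.
Definition cr r := let k := ((size r)%:R : R) in let S := (\sum_(j <- r) z j)%R in
  if (S / k < Lr r)%R then Lr r else if (Ur r < S / k)%R then Ur r else (S / k)%R.
Definition amin r := if (2%:R^-1 * qs r 0 <= 2%:R^-1 * qs r (cr r) + (size r)%:R * (lam2 * l0 (cr r)))%R
  then 0%R else cr r.

Lemma amin_min r : r != [::] -> (forall j, j \in r -> (l j <= 0 <= u j)%R) -> (0 <= lam2)%R ->
  forall a, gq r (amin r) <= gq r a.
Proof.
move=> rn0 hr hl2 a.
have hd : head 0%N r \in r by move: rn0; case: (r) => //= j r0 _; rewrite inE eqxx.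
have [hL1 hL2] := fmax_ge (l (head 0%N r)) r.
have [hU1 hU2] := fmin_le (u (head 0%N r)) r.
have feasE : forall b, all (fun j => (l j <= b <= u j)%R) r = (Lr r <= b <= Ur r)%R.
  move=> b; apply/idP/idP.
    move/allP => h; apply/andP; split.
      apply: fmax_le; first by have /andP[] := h _ hd.
      by move=> j /h /andP[].
    apply: fmin_ge; first by have /andP[] := h _ hd.
    by move=> j /h /andP[].
  move=> /andP[Lb bU]; apply/allP => j hj; apply/andP; split.
    exact: le_trans (hL2 _ hj) Lb.
  exact: le_trans bU (hU2 _ hj).
have L0 : (Lr r <= 0)%R.
  apply: fmax_le; first by have /andP[] := hr _ hd.
  by move=> j /hr /andP[].
have U0 : (0 <= Ur r)%R.
  apply: fmin_ge; first by have /andP[] := hr _ hd.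
  by move=> j /hr /andP[].
have k0 : (0 < ((size r)%:R : R))%R by rewrite ltr0n lt0n size_eq0.
have cLU : (Lr r <= cr r <= Ur r)%R.
  rewrite /cr; case: ifPn => [h|]; first by apply/andP; split; lra.
  rewrite -leNgt => h1; case: ifPn => [h2|]; first by apply/andP; split; lra.
  by rewrite -leNgt => h2; apply/andP; split.
have qle : forall b, (Lr r <= b <= Ur r)%R -> (qs r (cr r) <= qs r b)%R.
  move=> b hb; rewrite /qs !qsumE lerD2r /cr.
  apply: quad => //; lra.
have hq := qle a.
rewrite /gq !sum_omega !feasE.
case Hb : (Lr r <= a <= Ur r)%R; last by rewrite leey.
have {}hq := hq Hb.
rewrite /amin; case: ifP => hc.
  have -> : (Lr r <= 0 <= Ur r)%R by apply/andP.
  rewrite -!EFinD lee_fin l00 mulr0 mulr0 addr0.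
  have [->|an0] := eqVneq a 0%R; first by rewrite l00 !mulr0 addr0.
  rewrite l0N // mulr1; apply: (le_trans hc); apply: lerD; first lra.
  by apply: ler_wpM2l; [exact: ltW|apply: ler_piMr => //; exact: l0_le1].
rewrite cLU -!EFinD lee_fin.
have [Ha|an0] := eqVneq a 0%R.
  move: hc; rewrite Ha l00 !mulr0 addr0 => /negbT; rewrite -ltNge; lra.
rewrite (@l0N a an0); apply: lerD; first lra.
rewrite mulr1; by apply: ler_wpM2l; [exact: ltW|apply: ler_piMr => //; exact: l0_le1].
Qed.


Definition hf s (f : nat -> R) : \bar R :=
  ((2%:R^-1 * \sum_(1 <= j < s.+1) (f j - z j) ^+ 2)
   + lam1 * \sum_(1 <= j < s) l0 (f j - f j.+1))%:E
  + \sum_(1 <= j < s.+1) omega l u lam2 j (f j).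

Lemma hsE s (y : 'rV[R]_s) : hs z l u lam1 lam2 y = hf s (ent y).
Proof. by []. Qed.

Lemma eq_hf s f g : (forall j, (1 <= j <= s)%N -> f j = g j) -> hf s f = hf s g.
Proof.
move=> h; rewrite /hf.
have e1 : (\sum_(1 <= j < s.+1) (f j - z j) ^+ 2 = \sum_(1 <= j < s.+1) (g j - z j) ^+ 2)%R.
  by apply: eq_big_nat => j hj; rewrite h //; lia.
have e2 : (\sum_(1 <= j < s) l0 (f j - f j.+1) = \sum_(1 <= j < s) l0 (g j - g j.+1))%R.
  apply: eq_big_nat => j hj; rewrite (h j); last lia.
  by rewrite (h j.+1) //; lia.
have e3 : \sum_(1 <= j < s.+1) omega l u lam2 j (f j) = \sum_(1 <= j < s.+1) omega l u lam2 j (g j).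
  by apply: eq_big_nat => j hj; rewrite h //; lia.
by rewrite e1 e2 e3.
Qed.

Lemma hf_split s i f a : (0 < i)%N -> (i < s)%N -> (forall j, (i < j <= s)%N -> f j = a) ->
  hf s f = hf i f + ((2%:R^-1 * \sum_(i.+1 <= j < s.+1) (a - z j) ^+ 2) + lam1 * l0 (f i - a))%:E
           + \sum_(i.+1 <= j < s.+1) omega l u lam2 j a.
Proof.
move=> i0 his hfa.
have e1 : (\sum_(1 <= j < s.+1) (f j - z j) ^+ 2 = \sum_(1 <= j < i.+1) (f j - z j) ^+ 2
    + \sum_(i.+1 <= j < s.+1) (a - z j) ^+ 2)%R.
  rewrite (big_cat_nat _ (n := i.+1)); [|lia|lia].
  by congr (_ + _)%R; apply: eq_big_nat => j hj; rewrite hfa //; lia.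
have e2 : (\sum_(1 <= j < s) l0 (f j - f j.+1) = \sum_(1 <= j < i) l0 (f j - f j.+1)
    + l0 (f i - a))%R.
  rewrite (big_cat_nat _ (n := i)); [|lia|lia].
  congr (_ + _)%R; rewrite big_ltn //.
  rewrite (hfa i.+1); last lia.
  rewrite big1_seq; first by rewrite /= addr0.
  move=> j /andP[_]; rewrite mem_index_iota => hj.
  rewrite (hfa j); last lia.
  by rewrite (hfa j.+1) ?subrr ?l00 //; lia.
have e3 : \sum_(1 <= j < s.+1) omega l u lam2 j (f j) =
    \sum_(1 <= j < i.+1) omega l u lam2 j (f j) + \sum_(i.+1 <= j < s.+1) omega l u lam2 j a.
  rewrite (big_cat_nat _ (n := i.+1)); [|lia|lia].
  by congr (_ + _); apply: eq_big_nat => j hj; rewrite hfa //; lia.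
rewrite /hf e1 e2 e3 !mulrDr addrACA EFinD addeACA addeA.
by [].
Qed.

Lemma hf_split0 s f a : (0 < s)%N -> (forall j, (0 < j <= s)%N -> f j = a) ->
  hf s f = (2%:R^-1 * \sum_(1 <= j < s.+1) (a - z j) ^+ 2)%:E
           + \sum_(1 <= j < s.+1) omega l u lam2 j a.
Proof.
move=> s0 hfa.
have e1 : (\sum_(1 <= j < s.+1) (f j - z j) ^+ 2 = \sum_(1 <= j < s.+1) (a - z j) ^+ 2)%R.
  by apply: eq_big_nat => j hj; rewrite hfa //; lia.
have e2 : (\sum_(1 <= j < s) l0 (f j - f j.+1) = 0)%R.
  rewrite big1_seq // => j /andP[_]; rewrite mem_index_iota => hj.
  rewrite (hfa j); last lia.
  by rewrite (hfa j.+1) ?subrr ?l00 //; lia.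
have e3 : \sum_(1 <= j < s.+1) omega l u lam2 j (f j) = \sum_(1 <= j < s.+1) omega l u lam2 j a.
  by apply: eq_big_nat => j hj; rewrite hfa //; lia.
by rewrite /hf e1 e2 e3 mulr0 addr0.
Qed.

Lemma entE s (y : 'rV[R]_s) j (h : (j.-1 < s)%N) : ent y j = y ord0 (Ordinal h).
Proof. by rewrite /ent insubT. Qed.

Lemma ent_concat i s (v : 'rV[R]_i) a j : (1 <= j <= s)%N ->
  ent (concat_const s v a) j = if (j <= i)%N then ent v j else a.
Proof.
move=> hj; have h : (j.-1 < s)%N by lia.
rewrite (@entE _ _ _ h) mxE /=.
by move: hj h; case: j => [|j] hj h /=.
Qed.

Lemma ent_row i s (y : 'rV[R]_s) j : (i <= s)%N -> (1 <= j <= i)%N ->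
  ent (\row_(k < i) ent y k.+1) j = ent y j.
Proof.
move=> his hj; have h : (j.-1 < i)%N by lia.
rewrite (@entE _ _ _ h) mxE /=.
by move: hj h; case: j => [|j] hj h /=.
Qed.

Lemma omega_ge0 j a : (0 <= lam2)%R -> 0 <= omega l u lam2 j a.
Proof.
move=> h; rewrite /omega /delta_int; apply: adde_ge0.
  by rewrite lee_fin mulr_ge0 // l0_ge0.
by case: ifP.
Qed.

Lemma hf_ge0 s f : (0 <= lam1)%R -> (0 <= lam2)%R -> 0 <= hf s f.
Proof.
move=> h1 h2; rewrite /hf; apply: adde_ge0.
  rewrite lee_fin; apply: addr_ge0.
    apply: mulr_ge0; first by rewrite invr_ge0 ler0n.
    by apply: sumr_ge0 => j _; rewrite sqr_ge0.
  by apply: mulr_ge0 => //; apply: sumr_ge0 => j _; rewrite l0_ge0.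
by apply: sume_ge0 => j _; apply: omega_ge0.
Qed.

Lemma gq_ge0 r a : (0 <= lam2)%R -> 0 <= gq r a.
Proof.
move=> h2; rewrite /gq; apply: adde_ge0.
  rewrite lee_fin; apply: mulr_ge0; first by rewrite invr_ge0 ler0n.
  by apply: sumr_ge0 => j _; rewrite sqr_ge0.
by apply: sume_ge0 => j _; apply: omega_ge0.
Qed.

Lemma Hs_inf s : (0 < s)%N -> Hs z l u lam1 lam2 s = ereal_inf (range (hs z l u lam1 lam2 (s := s))).
Proof. by case: s. Qed.

Lemma decomp s (f : nat -> R) : (0 < s)%N -> exists i,
  [/\ (i < s)%N, (i = 0%N \/ f i != f s) & forall j, (i < j <= s)%N -> f j = f s].
Proof.
move=> s0.
suff H : forall t, (t < s)%N -> (forall j, (t < j <= s)%N -> f j = f s) -> exists i,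
    [/\ (i <= t)%N, (i = 0%N \/ f i != f s) & forall j, (i < j <= s)%N -> f j = f s].
  have [|j hj|i [h1 h2 h3]] := H s.-1; first lia.
    by have -> : j = s by lia.
  by exists i; split => //; lia.
elim => [|t IH] ht hj; first by exists 0%N; split => //; left.
have [e|ne] := eqVneq (f t.+1) (f s).
  have [|j hj'|i [h1 h2 h3]] := IH; first lia.
    have [->|jn] := eqVneq j t.+1; first exact: e.
    by apply: hj; lia.
  by exists i; split => //; lia.
by exists t.+1; split => //; right.
Qed.

Lemma argmin_nat (F : nat -> \bar R) s : (0 < s)%N ->
  exists i, (i < s)%N /\ forall i', (i' < s)%N -> F i <= F i'.
Proof.
case: s => // s _; elim: s => [|s [i [hi H]]].
  by exists 0%N; split => // i'; rewrite ltnS leqn0 => /eqP ->.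
have [hle|hlt] := leP (F i) (F s.+1).
  exists i; split; first lia.
  move=> i' hi'; have : (i' < s.+1)%N \/ i' = s.+1 by lia.
  by case=> [/H //|->].
exists s.+1; split => // i' hi'; have : (i' < s.+1)%N \/ i' = s.+1 by lia.
by case=> [/H h|->//]; apply: le_trans (ltW hlt) h.
Qed.


Lemma main (n : nat) (hlam1 : (0 < lam1)%R) (hlam2 : (0 < lam2)%R)
  (hlu : forall j : nat, (1 <= j <= n)%N -> (l j <= 0 <= u j)%R)
  (s : nat) (hs1 : (1 <= s <= n)%N) :
  ((exists (i : nat) (a : R), (i < s)%N /\ Ps z l u lam1 lam2 s i a = Hs z l u lam1 lam2 s)
   /\ (forall (i : nat) (a : R), (i < s)%N -> Hs z l u lam1 lam2 s <= Ps z l u lam1 lam2 s i a))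
  /\
  (forall (i : nat) (a : R), (i < s)%N ->
     (forall (i' : nat) (a' : R), (i' < s)%N -> Ps z l u lam1 lam2 s i a <= Ps z l u lam1 lam2 s i' a') ->
     forall v : 'rV[R]_i, (forall v' : 'rV[R]_i, hs z l u lam1 lam2 v <= hs z l u lam1 lam2 v') ->
     forall y : 'rV[R]_s,
       hs z l u lam1 lam2 (concat_const s v a) <= hs z l u lam1 lam2 y).
Proof.
have s0 : (0 < s)%N by lia.
have hl1 := ltW hlam1; have hl2 := ltW hlam2.
pose r i := index_iota i.+1 s.+1.
have F1 : forall i a, Ps z l u lam1 lam2 s i a = Hs z l u lam1 lam2 i + gq (r i) a + lam1%:E.
  by move=> i a; rewrite /gq addeA.
have F0 : forall a, Ps z l u lam1 lam2 s 0 a = gq (r 0%N) a.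
  by move=> a; rewrite F1 [Hs _ _ _ _ _ 0]/= addeAC -EFinD addNr add0e.
have F2 : forall i (v : 'rV_i) a, (0 < i)%N -> (i < s)%N ->
    hs z l u lam1 lam2 (concat_const s v a) <= hs z l u lam1 lam2 v + gq (r i) a + lam1%:E.
  move=> i v a i0 his.
  have e1 : forall j, (i < j <= s)%N -> ent (concat_const s v a) j = a.
    move=> j hj; rewrite ent_concat; last lia.
    by have -> : (j <= i)%N = false by lia.
  have e2 : forall j, (1 <= j <= i)%N -> ent (concat_const s v a) j = ent v j.
    move=> j hj; rewrite ent_concat; last lia.
    by have -> : (j <= i)%N = true by lia.
  rewrite hsE (@hf_split s i _ a i0 his e1) (@eq_hf i _ _ e2).
  apply: (@le_trans _ _ (hf i (ent v) + ((2%:R^-1 * \sum_(i.+1 <= j < s.+1) (a - z j) ^+ 2)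
        + lam1)%:E + \sum_(i.+1 <= j < s.+1) omega l u lam2 j a)).
    apply: leeD2r; apply: leeD2l; rewrite lee_fin lerD2l.
    by apply: ler_piMr => //; exact: l0_le1.
  by rewrite /gq EFinD !addeA [leLHS]addeAC.
have F3 : forall (v : 'rV_0) a, hs z l u lam1 lam2 (concat_const s v a) = gq (r 0%N) a.
  move=> v a; rewrite hsE (@hf_split0 s _ a s0) //.
  move=> j hj; rewrite ent_concat; last lia.
  by have -> : (j <= 0)%N = false by lia.
have F4 : forall y : 'rV_s, exists i, (i < s)%N /\
    Ps z l u lam1 lam2 s i (ent y s) <= hs z l u lam1 lam2 y.
  move=> y; have [i [his hi hc]] := @decomp s (ent y) s0.
  exists i; split => //.
  have [Ei|i0] := posnP i.
    subst i; rewrite F0 hsE (@hf_split0 s _ (ent y s) s0) //.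
  case: hi => [Ei|ne]; first lia.
  rewrite hsE (@hf_split s i _ (ent y s) i0 his hc) l0N; last by rewrite subr_eq0.
  rewrite mulr1 F1.
  have -> : hf i (ent y) = hs z l u lam1 lam2 (\row_(k < i) ent y k.+1).
    by rewrite hsE; apply: eq_hf => j hj; rewrite ent_row //; lia.
  have Hle : Hs z l u lam1 lam2 i <= hs z l u lam1 lam2 (\row_(k < i) ent y k.+1).
    by rewrite (@Hs_inf i i0); apply: ereal_inf_lbound; eexists.
  rewrite /gq EFinD !addeA [leRHS]addeAC.
  by apply: leeD2r; apply: leeD2r; apply: leeD2r.
have F5 : forall i a, (i < s)%N -> Hs z l u lam1 lam2 s <= Ps z l u lam1 lam2 s i a.
  move=> i a his; have [Ei|i0] := posnP i.
    by subst i; rewrite F0 -(F3 (\row_(k < 0) 0%R) a) (@Hs_inf s s0); apply: ereal_inf_lbound; eexists.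
  rewrite F1 -addeA.
  have Hi0 : 0 <= Hs z l u lam1 lam2 i.
    by rewrite (@Hs_inf i i0); apply: le_ereal_inf_tmp => _ [v _ <-]; exact: hf_ge0.
  case E : (gq (r i) a + lam1%:E) => [c| |].
  - rewrite -leeBlDr // (@Hs_inf i i0); apply: le_ereal_inf_tmp => _ [v _ <-].
    rewrite leeBlDr // -E addeA; apply: le_trans (F2 i v a i0 his).
    by rewrite (@Hs_inf s s0); apply: ereal_inf_lbound; eexists.
  - rewrite addey ?leey //; apply/negP => /eqP h; move: Hi0; rewrite h.
    by rewrite leeNy_eq.
  - have h0 : 0 <= gq (r i) a + lam1%:E.
      by apply: adde_ge0; [exact: gq_ge0 | rewrite lee_fin].
    by rewrite E in h0.
pose am i := amin (r i).
have Fam : forall i a, (i < s)%N -> Ps z l u lam1 lam2 s i (am i) <= Ps z l u lam1 lam2 s i a.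
  move=> i a his; rewrite !F1; apply: leeD2r; apply: leeD2l; apply: amin_min => //.
    by rewrite -size_eq0 /r /index_iota size_iota; lia.
  by move=> j; rewrite mem_index_iota => hj; apply: hlu; lia.
have [is0 [his Hmin]] := @argmin_nat (fun i => Ps z l u lam1 lam2 s i (am i)) s s0.
split.
  split; last by move=> i a hi; apply: F5.
  exists is0, (am is0); split => //.
  apply/le_anti/andP; split; last by apply: F5.
  rewrite (@Hs_inf s s0); apply: le_ereal_inf_tmp => _ [y _ <-].
  have [i [hi hy]] := F4 y; apply: le_trans hy.
  apply: le_trans (Fam i _ hi); exact: Hmin.
move=> i a hi Hmin' v hv y.
have [i' [hi' hy]] := F4 y; apply: le_trans hy.
apply: le_trans (Hmin' _ _ hi').
have [Ei|i0] := posnP i.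
  by subst i; rewrite F3 F0.
apply: le_trans (F2 i v a i0 hi) _; rewrite F1.
apply: leeD2r; apply: leeD2r.
by rewrite (@Hs_inf i i0); apply: le_ereal_inf_tmp => _ [w _ <-]; exact: hv.
Qed.

End Aux.

Theorem lemma3p3 (R : realType) (n : nat) (z l u : nat -> R) (lam1 lam2 : R)
  (hlam1 : (0 < lam1)%R) (hlam2 : (0 < lam2)%R)
  (hlu : forall j : nat, (1 <= j <= n)%N -> (l j <= 0 <= u j)%R)
  (s : nat) (hs1 : (1 <= s <= n)%N) :
  ((exists (i : nat) (a : R), (i < s)%N /\ Ps z l u lam1 lam2 s i a = Hs z l u lam1 lam2 s)
   /\ (forall (i : nat) (a : R), (i < s)%N -> Hs z l u lam1 lam2 s <= Ps z l u lam1 lam2 s i a))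
  /\
  (forall (i : nat) (a : R), (i < s)%N ->
     (forall (i' : nat) (a' : R), (i' < s)%N -> Ps z l u lam1 lam2 s i a <= Ps z l u lam1 lam2 s i' a') ->
     forall v : 'rV[R]_i, (forall v' : 'rV[R]_i, hs z l u lam1 lam2 v <= hs z l u lam1 lam2 v') ->
     forall y : 'rV[R]_s,
       hs z l u lam1 lam2 (concat_const s v a) <= hs z l u lam1 lam2 y).
Proof. exact: (@main R z l u lam1 lam2 n hlam1 hlam2 hlu s hs1). Qed.
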